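(* Let $m\geq 2$ and $2\leq n\leq m+1$ be integers, let $T_n$ be any tree with $n$ vertices and let $\overline{K_m}$ be the edgeless graph on $m$ vertices. Then $\chi_L(T_n\odot\overline{K_m})=m+1$.
   Context: All graphs are finite and simple. A $k$-coloring of a connected graph $G$ is a map $c:V(G)\to\{1,\dots,k\}$ with $c(u)\neq c(v)$ for adjacent $u,v$; it induces the partition $\Pi=\{C_1,\dots,C_k\}$ into color classes $C_i=c^{-1}(i)$. The color code of $v$ is $c_\Pi(v)=(d(v,C_1),\dots,d(v,C_k))$ with $d(v,C_i)=\min\{d(v,x): x\in C_i\}$ (graph distance). $c$ is a locating coloring if distinct vertices have distinct color codes; the locating-chromatic number $\chi_L(G)$ is the least $k$ for which a locating $k$-coloring exists. The corona product $G\odot H$ of a graph $G$ with vertex set $\{a_1,\dots,a_n\}$ and a graph $H$ is obtained from one copy of $G$ and $n$ disjoint copies of $H$ by joining $a_i$ to every vertex of the $i$-th copy of $H$. *)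

(* Defs.v *)
From mathcomp Require Import all_boot.
Set Implicit Arguments. Unset Strict Implicit. Unset Printing Implicit Defensive.

Definition simple_graph (V : finType) (e : rel V) : Prop :=
  symmetric e /\ irreflexive e.

Definition connected_graph (V : finType) (e : rel V) : Prop :=
  forall x y : V, connect e x y.

Definition is_tree (V : finType) (e : rel V) : Prop :=
  simple_graph e /\ connected_graph e /\
  ~ (exists s : seq V, [/\ uniq s, 2 < size s & cycle e s]).

Fixpoint ball (V : finType) (e : rel V) (k : nat) (x : V) : {set V} :=
  match k with
  | 0 => [set x]
  | k'.+1 => ball e k' x :|: [set y | [exists z in ball e k' x, e z y]]
  end.

(* Graph distance d(x,y): least k with y within k steps of x.
   (In a connected graph on #|V| vertices it is < #|V|; the fallback
   value #|V| is never used for connected graphs.) *)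
Definition dist (V : finType) (e : rel V) (x y : V) : nat :=
  find (fun k => y \in ball e k x) (iota 0 #|V|).

Definition dist_set (V : finType) (e : rel V) (x : V) (C : {set V}) : nat :=
  \big[minn/#|V|]_(y in C) dist e x y.

Definition color_class (V : finType) (k : nat) (c : V -> 'I_k) (i : 'I_k)
  : {set V} := [set v | c v == i].

Definition proper_coloring (V : finType) (e : rel V) (k : nat) (c : V -> 'I_k)
  : Prop :=
  (forall u v, e u v -> c u != c v) /\ (forall i : 'I_k, exists v, c v = i).

Definition color_code (V : finType) (e : rel V) (k : nat) (c : V -> 'I_k)
  (v : V) : 'I_k -> nat := fun i => dist_set e v (color_class c i).

Definition locating_coloring (V : finType) (e : rel V) (k : nat)
  (c : V -> 'I_k) : Prop :=
  proper_coloring e c /\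
  (forall u v, (forall i, color_code e c u i = color_code e c v i) -> u = v).

Definition has_locating_coloring (V : finType) (e : rel V) (k : nat) : Prop :=
  exists c : V -> 'I_k, locating_coloring e c.

Definition locating_chromatic_number_is (V : finType) (e : rel V) (k : nat)
  : Prop :=
  has_locating_coloring e k /\
  (forall k', has_locating_coloring e k' -> k <= k').

(* Corona product G (.) H: vertices VG + VG*VH; inl a = vertex a_i of G,
   inr (a,h) = vertex h of the copy of H attached to a. *)
Definition corona (VG VH : finType) (g : rel VG) (h : rel VH)
  : rel (VG + (VG * VH))%type :=
  fun x y =>
    match x, y with
    | inl a, inl b => g a b
    | inl a, inr (b, _) => a == b
    | inr (a, _), inl b => a == b
    | inr (a, u), inr (b, w) => (a == b) && h u w
    end.

Definition edgeless (m : nat) : rel 'I_m := fun _ _ => false.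

(* Main.v *)
Require Import Defs.
From mathcomp Require Import all_boot zify.
Set Implicit Arguments. Unset Strict Implicit. Unset Printing Implicit Defensive.

Section Dist.
Variables (V : finType) (e : rel V).

Lemma ball_S k x : ball e k.+1 x = ball e k x :|: [set y | [exists z in ball e k x, e z y]].
Proof. by []. Qed.

Lemma ball_sub k x : ball e k x \subset ball e k.+1 x.
Proof. by rewrite ball_S subsetUl. Qed.

Lemma ball_mono k k' x : k <= k' -> ball e k x \subset ball e k' x.
Proof.
move=> /subnKC <-; elim: (k' - k) => [|d IH]; first by rewrite addn0.
by rewrite addnS (subset_trans IH (ball_sub _ _)).
Qed.

Lemma ball0 x y : (y \in ball e 0 x) = (y == x).
Proof. by rewrite /= in_set1. Qed.

Lemma ball1 x y : (y \in ball e 1 x) = (y == x) || e x y.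
Proof.
rewrite ball_S in_setU ball0 in_set; congr (_ || _).
apply/existsP/idP => [[z /andP[]]|exy]; first by rewrite ball0 => /eqP ->.
by exists x; rewrite ball0 eqxx.
Qed.

Lemma ball2 x z y : e x z -> e z y -> y \in ball e 2 x.
Proof.
move=> exz ezy; rewrite ball_S in_setU; apply/orP; right.
rewrite in_set; apply/existsP; exists z; rewrite ezy andbT.
by rewrite ball1 exz orbT.
Qed.

Lemma dist_eq x y k : k < #|V| -> y \in ball e k x ->
  (forall i, i < k -> y \notin ball e i x) -> dist e x y = k.
Proof.
move=> hk hy hn; rewrite /dist.
have -> : iota 0 #|V| = iota 0 k ++ iota k (#|V| - k) by rewrite -iotaD subnKC // ltnW.
rewrite find_cat size_iota.
have -> : has (fun k0 => y \in ball e k0 x) (iota 0 k) = false.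
  apply/hasPn => i; rewrite mem_iota add0n => /andP[_ hi]; exact: hn.
case E: (#|V| - k) => [|r]; first by move/eqP: E; rewrite subn_eq0 leqNgt hk.
by rewrite /= hy addn0.
Qed.

Lemma dist_ge x y d : d <= #|V| -> (forall i, i < d -> y \notin ball e i x) ->
  d <= dist e x y.
Proof.
move=> hd hn; rewrite /dist.
set P := (fun k0 => y \in ball e k0 x).
case: (ltnP (find P (iota 0 #|V|)) d) => // hlt.
have hh : has P (iota 0 #|V|) by rewrite has_find size_iota (leq_trans hlt hd).
have := nth_find 0 hh; rewrite nth_iota ?add0n; last by rewrite (leq_trans hlt hd).
by rewrite /P (negbTE (hn _ hlt)).
Qed.

Lemma dist_le_card x y : dist e x y <= #|V|.
Proof. by rewrite /dist (leq_trans (find_size _ _)) ?size_iota. Qed.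

Lemma big_min_le (r : seq V) (P : pred V) (F : V -> nat) N y :
  y \in r -> P y -> \big[minn/N]_(i <- r | P i) F i <= F y.
Proof.
elim: r => //= z r IH; rewrite inE big_cons => /orP[/eqP <-|yr] Py.
  by rewrite Py geq_minl.
case: (P z); last exact: IH.
exact: leq_trans (geq_minr _ _) (IH yr Py).
Qed.

Lemma dist_set_le x (C : {set V}) y : y \in C -> dist_set e x C <= dist e x y.
Proof. move=> yC; rewrite /dist_set; apply: big_min_le => //; exact: mem_index_enum. Qed.

Lemma dist_set_ge x (C : {set V}) d : d <= #|V| -> (forall y, y \in C -> d <= dist e x y) ->
  d <= dist_set e x C.
Proof.
move=> hd h; rewrite /dist_set.
apply: (big_ind (fun r => d <= r)) => //; first by move=> a b ha hb; rewrite leq_min ha hb.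
Qed.

Lemma dist_set_le_card x (C : {set V}) : dist_set e x C <= #|V|.
Proof.
rewrite /dist_set; apply: (big_ind (fun r => r <= #|V|)) => //.
- by move=> a b ha hb; rewrite geq_min ha.
- move=> y _; exact: dist_le_card.
Qed.

Lemma dist_set_eq x (C : {set V}) d y0 : y0 \in C -> dist e x y0 = d ->
  (forall y, y \in C -> d <= dist e x y) -> dist_set e x C = d.
Proof.
move=> hy0 hd h; apply/eqP; rewrite eqn_leq; apply/andP; split.
  by rewrite -hd dist_set_le.
apply: dist_set_ge => //; rewrite -hd; exact: dist_le_card.
Qed.

Lemma dist0 x : dist e x x = 0.
Proof. apply: dist_eq => //; last by rewrite ball0. by apply/card_gt0P; exists x. Qed.

Lemma dist1 x y : 1 < #|V| -> x != y -> e x y -> dist e x y = 1.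
Proof.
move=> hV nxy exy; apply: dist_eq => //; first by rewrite ball1 exy orbT.
by case=> // _; rewrite ball0 eq_sym.
Qed.

Lemma dist2 x z y : 2 < #|V| -> x != y -> ~~ e x y -> e x z -> e z y -> dist e x y = 2.
Proof.
move=> hV nxy nexy exz ezy; apply: dist_eq => //; first exact: ball2 exz ezy.
case=> [|[|//]] _; first by rewrite ball0 eq_sym.
by rewrite ball1 eq_sym (negbTE nxy) (negbTE nexy).
Qed.

Lemma dist_ge1 x y : x != y -> 1 <= dist e x y.
Proof.
move=> nxy; apply: dist_ge; first by apply/card_gt0P; exists x.
by case=> // _; rewrite ball0 eq_sym.
Qed.

Lemma dist_ge2 x y : 2 < #|V| -> x != y -> ~~ e x y -> 2 <= dist e x y.
Proof.
move=> hV nxy nexy; apply: dist_ge; first exact: ltnW.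
case=> [|[|//]] _; first by rewrite ball0 eq_sym.
by rewrite ball1 eq_sym (negbTE nxy) (negbTE nexy).
Qed.

Variable s : V -> V.
Hypothesis sK : involutive s.
Hypothesis se : forall x y, e (s x) (s y) = e x y.

Lemma ball_s k x y : (s y \in ball e k (s x)) = (y \in ball e k x).
Proof.
elim: k y => [|k IH] y; first by rewrite !ball0 (inj_eq (inv_inj sK)).
rewrite !ball_S !in_setU IH !in_set; congr (_ || _).
apply/existsP/existsP => [[z /andP[hz ez]]|[z /andP[hz ez]]].
- exists (s z); rewrite -IH sK hz /=. by rewrite -se sK.
- exists (s z); by rewrite IH hz se.
Qed.

Lemma dist_s x y : dist e (s x) (s y) = dist e x y.
Proof. by rewrite /dist; apply: eq_find => k; exact: ball_s. Qed.

Lemma dist_set_s_le x (C : {set V}) : (forall y, (s y \in C) = (y \in C)) ->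
  dist_set e (s x) C <= dist_set e x C.
Proof.
move=> hC; apply: dist_set_ge; first exact: dist_set_le_card.
by move=> y yC; rewrite -dist_s dist_set_le // hC.
Qed.

Lemma dist_set_s x (C : {set V}) : (forall y, (s y \in C) = (y \in C)) ->
  dist_set e (s x) C = dist_set e x C.
Proof.
move=> hC; apply/eqP; rewrite eqn_leq dist_set_s_le //=.
by rewrite -{1}(sK x) dist_set_s_le.
Qed.
End Dist.

Definition sw (T : eqType) (u v x : T) := if x == u then v else if x == v then u else x.

Lemma sw_inv (T : eqType) (u v : T) : involutive (sw u v).
Proof.
move=> x; rewrite /sw.
case: (eqVneq x u) => [->|xu]; first by rewrite eqxx; case: eqVneq => [->|].
case: (eqVneq x v) => [->|xv]; first by rewrite eqxx.
by rewrite (negbTE xu) (negbTE xv).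
Qed.

Lemma sw_mem (T : eqType) (u v x : T) :
  (sw u v x == u) || (sw u v x == v) = (x == u) || (x == v).
Proof.
rewrite /sw; case: (eqVneq x u) => [->|xu]; first by rewrite !eqxx orbT.
by case: (eqVneq x v) => [exv|xv] //=; rewrite ?eqxx // (negbTE xu) (negbTE xv).
Qed.

Lemma sw_id (T : eqType) (u v x : T) : ~~ ((x == u) || (x == v)) -> sw u v x = x.
Proof. by rewrite negb_or /sw => /andP[/negbTE -> /negbTE ->]. Qed.

Section Corona.
Variables (n m : nat) (t : rel 'I_n).
Local Notation V := ('I_n + 'I_n * 'I_m)%type.
Local Notation e := (corona t (@edgeless m)).

Lemma e_inr a j (y : V) : e (inr (a, j)) y = (y == inl a).
Proof. by case: y => [b|[b w]] /=; rewrite /edgeless ?andbF // eq_sym. Qed.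

Lemma e_inr' a j (y : V) : e y (inr (a, j)) = (y == inl a).
Proof. by case: y => [b|[b w]] /=; rewrite /edgeless ?andbF. Qed.

Lemma lower k (c : V -> 'I_k) (a0 : 'I_n) : locating_coloring e c -> m.+1 <= k.
Proof.
move=> [[hp _] hl].
pose f (o : option 'I_m) := match o with None => c (inl a0) | Some j => c (inr (a0, j)) end.
have finj : injective f.
  have leaf : forall j j', c (inr (a0, j)) = c (inr (a0, j')) -> j = j'.
    move=> j j' hc.
    pose u : V := inr (a0, j); pose v : V := inr (a0, j').
    have se : forall x y, e (sw u v x) (sw u v y) = e x y.
      have key : forall x, (x == u) || (x == v) -> forall y, e x y = (y == inl a0).
        by move=> x /orP[] /eqP -> y; rewrite e_inr.
      have key' : forall x, (x == u) || (x == v) -> forall y, e y x = (y == inl a0).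
        by move=> x /orP[] /eqP -> y; rewrite e_inr'.
      have swa : forall y, (sw u v y == inl a0) = (y == inl a0).
        by move=> y; rewrite /sw; case: (eqVneq y u) => [->|_] //; case: (eqVneq y v) => [->|_].
      move=> x y.
      case hx: ((x == u) || (x == v)).
        by rewrite (key (sw u v x)) ?sw_mem // (key x hx) swa.
      rewrite (sw_id (negbT hx)).
      case hy: ((y == u) || (y == v)).
        by rewrite (key' (sw u v y)) ?sw_mem // (key' y hy) ?swa.
      by rewrite (sw_id (negbT hy)).
    have hC : forall i y, (sw u v y \in color_class c i) = (y \in color_class c i).
      move=> i y; rewrite !inE /sw.
      case: (eqVneq y u) => [->|_]; first by rewrite hc.
      by case: (eqVneq y v) => [->|_] //; rewrite hc.
    have : v = u.
      apply: hl => i; rewrite /color_code.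
      have -> : v = sw u v u by rewrite /sw eqxx.
      exact: dist_set_s (@sw_inv _ u v) se _ _ (hC i).
    by case.
  case=> [j|] [j'|] //= hc.
  - by rewrite (leaf _ _ hc).
  - by move: (hp (inl a0) (inr (a0, j))) => /=; rewrite eqxx => /(_ isT); rewrite hc eqxx.
  - by move: (hp (inl a0) (inr (a0, j'))) => /=; rewrite eqxx => /(_ isT); rewrite hc eqxx.
have := leq_card f finj.
by rewrite card_option !card_ord.
Qed.
End Corona.

Lemma avoid2 m (x y : 'I_m.+1) : 2 <= m -> exists l : 'I_m.+1, (l != x) && (l != y).
Proof.
move=> hm.
case: (pickP [pred l : 'I_m.+1 | (l != x) && (l != y)]) => [l hl|hnone]; first by exists l.
have : #|'I_m.+1| <= #|[set x; y]|.
  apply: subset_leq_card; apply/subsetP => l _; move: (hnone l) => /= /negbT.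
  by rewrite negb_and !negbK in_set2.
rewrite card_ord cards2; case: (x != y) => /=; lia.
Qed.

Lemma lift_neqL k (h : 'I_k.+1) (j : 'I_k) : (h == lift h j) = false.
Proof. exact: negbTE (neq_lift h j). Qed.
Lemma lift_neqR k (h : 'I_k.+1) (j : 'I_k) : (lift h j == h) = false.
Proof. by rewrite eq_sym lift_neqL. Qed.

Section Upper.
Variables (n m : nat) (t : rel 'I_n).
Hypotheses (Hn : n <= m.+1) (Hm : 2 <= m) (a0 : 'I_n) (tirr : irreflexive t).
Local Notation V := ('I_n + 'I_n * 'I_m)%type.
Local Notation e := (corona t (@edgeless m)).

Definition ca (a : 'I_n) : 'I_m.+1 := widen_ord Hn a.
Definition col (x : V) : 'I_m.+1 :=
  match x with inl a => ca a | inr (a, j) => lift (ca a) j end.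

Lemma ca_inj a b : (ca a == ca b) = (a == b).
Proof. by apply/eqP/eqP => [h|-> //]; apply: val_inj; move: h => /(congr1 val). Qed.

Lemma cardV : 2 < #|{: V}|.
Proof.
rewrite card_sum card_prod !card_ord.
have := ltn_ord a0; nia.
Qed.

Lemma code_inl a l : dist_set e (inl a) (color_class col l) = if l == ca a then 0 else 1.
Proof.
case: eqVneq => [->|hl].
  by apply: (@dist_set_eq _ _ _ _ _ (inl a)); [rewrite inE eqxx | exact: dist0 | ].
case: (unliftP (ca a) l) hl => [j0 ->|->]; last by rewrite eqxx.
move=> hl; apply: (@dist_set_eq _ _ _ _ _ (inr (a, j0))).
- by rewrite inE.
- by apply: dist1; rewrite //= ?eqxx //; exact: ltnW cardV.
- move=> y; rewrite inE => /eqP hy; apply: dist_ge1; apply/eqP => eqy; subst y.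
  by move: hy => /= /eqP; rewrite eq_sym (negbTE hl).
Qed.

Lemma code_inr a j l : dist_set e (inr (a, j)) (color_class col l) =
  if l == lift (ca a) j then 0 else if l == ca a then 1 else 2.
Proof.
case: eqVneq => [->|h1].
  by apply: (@dist_set_eq _ _ _ _ _ (inr (a, j))); [rewrite inE eqxx | exact: dist0 | ].
case: eqVneq => [->|h2].
  apply: (@dist_set_eq _ _ _ _ _ (inl a)).
  - by rewrite inE eqxx.
  - by apply: dist1; rewrite //= ?e_inr ?eqxx //; exact: ltnW cardV.
  - move=> y; rewrite inE => /eqP hy; apply: dist_ge1; apply/eqP => eqy; subst y.
    by move: hy => /= /eqP; rewrite ?lift_neqL ?lift_neqR.
case: (unliftP (ca a) l) h1 h2 => [j0 ->|->]; last by rewrite eqxx.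
move=> h1 _; have nj : j0 != j by apply: contra h1 => /eqP ->.
apply: (@dist_set_eq _ _ _ _ _ (inr (a, j0))).
- by rewrite inE.
- apply: (@dist2 _ _ _ (inl a)); first exact: cardV.
  + by apply/eqP => -[] /eqP; rewrite eq_sym (negbTE nj).
  + by rewrite e_inr.
  + by rewrite e_inr.
  + by rewrite /= eqxx.
- move=> y; rewrite inE => /eqP hy; apply: dist_ge2; first exact: cardV.
  + apply/eqP => eqy; subst y; move: hy => /= /eqP hy.
    by move: (lift_inj (eqP hy)) h1 => ->; rewrite eqxx.
  + rewrite e_inr; apply/eqP => eqy; subst y; move: hy => /= /eqP.
    by rewrite ?lift_neqL ?lift_neqR.
Qed.

Lemma upper_loc : locating_coloring e col.
Proof.
split; first split.
- case=> [a|[a j]] [b|[b j']] //=.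
  + move=> tab; rewrite ca_inj; apply/eqP => eab; subst b; by rewrite tirr in tab.
  + by move=> /eqP <-; exact: neq_lift.
  + by move=> /eqP <-; rewrite eq_sym; exact: neq_lift.
  + by rewrite /edgeless andbF.
- move=> i; case: (unliftP (ca a0) i) => [j ->|->].
  + by exists (inr (a0, j)).
  + by exists (inl a0).
rewrite /color_code.
case=> [a|[a j]] [b|[b j']] h.
- move: (h (ca a)); rewrite !code_inl eqxx eq_sym ca_inj.
  by case: eqVneq => [->|].
- have [l /andP[l1 l2]] := avoid2 (lift (ca b) j') (ca b) Hm.
  move: (h l); rewrite code_inl code_inr (negbTE l1) (negbTE l2).
  by case: (l == ca a).
- have [l /andP[l1 l2]] := avoid2 (lift (ca a) j) (ca a) Hm.
  move: (h l); rewrite code_inl code_inr (negbTE l1) (negbTE l2).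
  by case: (l == ca b).
- move: (h (lift (ca a) j)); rewrite !code_inr eqxx.
  case: eqVneq => [hl _|]; last by case: ifP.
  move: (h (ca a)); rewrite !code_inr -hl !lift_neqL eqxx ca_inj.
  case: eqVneq => [eab _|] //; subst b.
  by rewrite (lift_inj hl).
Qed.
End Upper.

Theorem theorem6 (m n : nat) (t : rel 'I_n) :
  2 <= m -> 2 <= n -> n <= m.+1 -> is_tree t ->
  locating_chromatic_number_is (corona t (@edgeless m)) m.+1.
Proof.
move=> hm hn hnm [[_ tirr] _].
have a0 : 'I_n := Ordinal (ltnW hn).
split.
- by exists (col hnm); apply: upper_loc.
- by move=> k [c hc]; apply: lower hc.
Qed.
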